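(* Let $A\ge0$, let $c:S^1_L\to\mathbb R^2$ be an arclength-parametrized immersion with curvature $\kappa$, and consider on $U=\{f\in C^\infty(S^1_L,\mathbb R):\|f\|_\infty<\varepsilon\}$ (for small $\varepsilon>0$) the metric $$G_f(h,k)=\int_{S^1_L}(1+A\kappa_{\psi(f)}^2)\,\frac{hk\,(1-f\kappa)^2}{\sqrt{(1-f\kappa)^2+f'^2}}\,d\theta,\qquad \psi(f)=c+f\,ic'.$$ Define $\Gamma_f$ by $2G_f(\Gamma_f(h,k),l)=dG(f)(l)(h,k)-dG(f)(h)(k,l)-dG(f)(k)(l,h)$ and $$R_f(m,h,m,h)=-d^2G(f)(m,h)(h,m)+\tfrac12d^2G(f)(m,m)(h,h)+\tfrac12d^2G(f)(h,h)(m,m)-G_f(\Gamma_f(h,m),\Gamma_f(m,h))+G_f(\Gamma_f(m,m),\Gamma_f(h,h)),$$ where $dG(f)(l)(h,k)$ and $d^2G(f)(m,l)(h,k)$ denote the first and second derivatives of $f\mapsto G_f(h,k)$ in the directions $l$ and $m,l$. Then at $f=0$: $$\Gamma_0(h,k)=\frac{(\tfrac12\kappa-\tfrac12A\kappa^3+A\kappa'')hk+2A\kappa'(h'k+hk')+2A\kappa h'k'}{1+A\kappa^2},$$ and, with $W=mh'-m'h$, $$R_0(m,h,m,h)=\int_{S^1_L}\frac{-(A\kappa^2-1)^2+4A^2\kappa\kappa''-8A^2\kappa'^2}{2(1+A\kappa^2)}\,W^2\,d\theta+\int_{S^1_L}A\,W'^2\,d\theta.$$ In particular, for $A=0$, $\Gamma_0(h,k)=\tfrac12\kappa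 hk$ and $R_0(m,h,m,h)=-\tfrac12\int_{S^1_L}W^2\,d\theta\le0$, so the sectional curvature $k_0(P(m,h))=-R_0(m,h,m,h)/(G_0(m,m)G_0(h,h)-G_0(m,h)^2)$ is non-negative.
   Context: $S^1_L=\mathbb R/L\mathbb Z$, with $\theta$ the arclength parameter of $c$, so $|c'|\equiv1$; $\mathbb R^2\cong\mathbb C$; primes denote $d/d\theta$. For an immersion $e$, $\kappa_e=\det(e',e'')/|e'|^3$; $\kappa=\kappa_c$. The map $f\mapsto\pi(\psi(f))$ is a chart of the space of unparametrized curves near $\pi(c)$, and $G_f$ is the pullback of the metric $G^A(h,k)=\int(1+A\kappa^2)\langle h,k\rangle|c_\theta|d\theta$ restricted to normal vectors. $h,k,l,m\in C^\infty(S^1_L,\mathbb R)$. *)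

(* Defs.v *)
From Stdlib Require Import Reals ClassicalEpsilon.
From Coquelicot Require Import Coquelicot.
Open Scope R_scope.

Definition smooth (g : R -> R) : Prop := forall (n : nat) (x : R), ex_derive_n g n x.
(* functions on S^1_L = R / L Z, viewed as L-periodic functions on R *)
Definition periodic (L : R) (g : R -> R) : Prop := forall x, g (x + L) = g x.
Definition Cinf_per (L : R) (g : R -> R) : Prop := smooth g /\ periodic L g.

Definition circ_int (L : R) (g : R -> R) : R := RInt g 0 L.

Definition curvature (e1 e2 : R -> R) (x : R) : R :=
  (Derive e1 x * Derive_n e2 2 x - Derive e2 x * Derive_n e1 2 x) /
  (sqrt (Derive e1 x ^ 2 + Derive e2 x ^ 2)) ^ 3.

(* psi(f) = c + f * i c', with c = (c1,c2), i c' = (-c2', c1') *)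
Definition psi1 (c1 c2 f : R -> R) (x : R) : R := c1 x - f x * Derive c2 x.
Definition psi2 (c1 c2 f : R -> R) (x : R) : R := c2 x + f x * Derive c1 x.

Definition Gmet (A L : R) (c1 c2 f h k : R -> R) : R :=
  circ_int L (fun x =>
    (1 + A * (curvature (psi1 c1 c2 f) (psi2 c1 c2 f) x) ^ 2) *
    (h x * k x * (1 - f x * curvature c1 c2 x) ^ 2 /
       sqrt ((1 - f x * curvature c1 c2 x) ^ 2 + (Derive f x) ^ 2))).

Definition dG (A L : R) (c1 c2 f l h k : R -> R) : R :=
  Derive (fun t => Gmet A L c1 c2 (fun x => f x + t * l x) h k) 0.

Definition d2G (A L : R) (c1 c2 f m l h k : R -> R) : R :=
  Derive (fun s => dG A L c1 c2 (fun x => f x + s * m x) l h k) 0.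

Definition Gamma (A L : R) (c1 c2 f h k : R -> R) : R -> R :=
  epsilon (inhabits (fun _ : R => 0)) (fun g => Cinf_per L g /\
    forall l, Cinf_per L l ->
      2 * Gmet A L c1 c2 f g l =
        dG A L c1 c2 f l h k - dG A L c1 c2 f h k l - dG A L c1 c2 f k l h).

Definition Curv (A L : R) (c1 c2 f m h : R -> R) : R :=
  - d2G A L c1 c2 f m h h m
  + / 2 * d2G A L c1 c2 f m m h h
  + / 2 * d2G A L c1 c2 f h h m m
  - Gmet A L c1 c2 f (Gamma A L c1 c2 f h m) (Gamma A L c1 c2 f m h)
  + Gmet A L c1 c2 f (Gamma A L c1 c2 f m m) (Gamma A L c1 c2 f h h).

Definition sectional (A L : R) (c1 c2 f m h : R -> R) : R :=
  - Curv A L c1 c2 f m h /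
  (Gmet A L c1 c2 f m m * Gmet A L c1 c2 f h h - (Gmet A L c1 c2 f m h) ^ 2).

Definition lin_indep (m h : R -> R) : Prop :=
  forall a b : R, (forall x, a * m x + b * h x = 0) -> a = 0 /\ b = 0.

(* Main.v *)
Require Import Defs.
From Stdlib Require Import Reals Lra Psatz ClassicalEpsilon FunctionalExtensionality ZArith Lia.
From Coquelicot Require Import Coquelicot.
Open Scope R_scope.

Definition Cn (n : nat) (f : R -> R) : Prop :=
  forall k, (k <= n)%nat -> forall x, ex_derive_n f k x.

Lemma Derive_n_S_D (f : R -> R) n x : Derive_n f (S n) x = Derive_n (Derive f) n x.
Proof.
  revert x; induction n; intro x; [reflexivity|].
  change (Derive (Derive_n f (S n)) x = Derive (Derive_n (Derive f) n) x).
  apply Derive_ext; auto.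
Qed.

Lemma Cn_S n f : Cn (S n) f <-> (forall x, ex_derive f x) /\ Cn n (Derive f).
Proof.
  split.
  - intros H; split.
    + intro x; exact (H 1%nat ltac:(lia) x).
    + intros k Hk x. destruct k; [exact I|].
      simpl. eapply ex_derive_ext; [intro t; apply Derive_n_S_D|].
      exact (H (S (S k)) ltac:(lia) x).
  - intros [H1 H2] k Hk x. destruct k; [exact I|]. destruct k; [exact (H1 x)|].
    simpl. eapply ex_derive_ext; [intro t; symmetry; apply Derive_n_S_D|].
    exact (H2 (S k) ltac:(lia) x).
Qed.

Lemma Cn_le n m f : (m <= n)%nat -> Cn n f -> Cn m f.
Proof. intros Hm H k Hk x; apply H; lia. Qed.

Lemma Cn_ext n f g : (forall x, f x = g x) -> Cn n f -> Cn n g.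
Proof. intros E H k Hk x; eapply ex_derive_n_ext; [exact E| apply H; auto]. Qed.

Lemma Cn_const n c : Cn n (fun _ => c).
Proof. intros k Hk x; apply ex_derive_n_const. Qed.

Lemma Cn_plus n : forall f g, Cn n f -> Cn n g -> Cn n (fun x => f x + g x).
Proof.
  induction n; intros f g Hf Hg.
  - intros k Hk x; replace k with 0%nat by lia; exact I.
  - apply Cn_S in Hf as [Hf1 Hf2]. apply Cn_S in Hg as [Hg1 Hg2].
    apply Cn_S; split.
    + intro x; auto_derive; repeat split; auto.
    + eapply Cn_ext; [| apply (IHn _ _ Hf2 Hg2)].
      intro x; simpl; symmetry; apply Derive_plus; auto.
Qed.

Lemma Cn_mult n : forall f g, Cn n f -> Cn n g -> Cn n (fun x => f x * g x).
Proof.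
  induction n; intros f g Hf Hg.
  - intros k Hk x; replace k with 0%nat by lia; exact I.
  - pose proof Hf as Hf'. pose proof Hg as Hg'.
    apply Cn_S in Hf as [Hf1 Hf2]. apply Cn_S in Hg as [Hg1 Hg2].
    apply Cn_S; split.
    + intro x; auto_derive; repeat split; auto.
    + eapply Cn_ext; [| apply Cn_plus; [apply (IHn _ _ Hf2 (Cn_le (S n) n _ ltac:(lia) Hg'))
                                        |apply (IHn _ _ (Cn_le (S n) n _ ltac:(lia) Hf') Hg2)]].
      intro x; simpl; symmetry; apply Derive_mult; auto.
Qed.

Lemma Cn_opp n f : Cn n f -> Cn n (fun x => - f x).
Proof.
  intro H; eapply Cn_ext; [|apply (Cn_mult n (fun _ => -1) f (Cn_const _ _) H)].
  intro; simpl; ring.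
Qed.

Lemma Cn_inv n : forall u, Cn n u -> (forall x, u x <> 0) -> Cn n (fun x => / u x).
Proof.
  induction n; intros u Hu Hne.
  - intros k Hk x; replace k with 0%nat by lia; exact I.
  - pose proof Hu as Hu'. apply Cn_S in Hu as [Hu1 Hu2].
    apply Cn_S; split.
    + intro x; auto_derive; repeat split; auto.
    + eapply Cn_ext; [|apply Cn_opp; apply Cn_mult; [exact Hu2|
          apply Cn_mult; apply IHn; auto; apply (Cn_le (S n) n _ ltac:(lia) Hu')]].
      intro x; simpl. rewrite Derive_inv; auto. field. auto.
Qed.

Lemma smooth_Cn f : smooth f <-> forall n, Cn n f.
Proof.
  split; intros H.
  - intros n k Hk x; apply H.
  - intros n x; apply (H n n (Nat.le_refl _)).
Qed.

Lemma smooth_ex f x : smooth f -> ex_derive f x.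
Proof. intro H; exact (H 1%nat x). Qed.

Lemma smooth_D f : smooth f -> smooth (Derive f).
Proof.
  intro H; apply smooth_Cn; intro n; pose proof (proj1 (smooth_Cn f) H) as H'.
  exact (proj2 (proj1 (Cn_S _ _) (H' (S n)))).
Qed.

Lemma smooth_ext f g : (forall x, f x = g x) -> smooth f -> smooth g.
Proof. intros E H; apply smooth_Cn; intro n; apply (Cn_ext n f g E); apply (proj1 (smooth_Cn f) H). Qed.
Lemma smooth_const c : smooth (fun _ => c).
Proof. apply smooth_Cn; intro; apply Cn_const. Qed.
Lemma smooth_plus f g : smooth f -> smooth g -> smooth (fun x => f x + g x).
Proof. rewrite !smooth_Cn; intros; apply Cn_plus; auto. Qed.
Lemma smooth_mult f g : smooth f -> smooth g -> smooth (fun x => f x * g x).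
Proof. rewrite !smooth_Cn; intros; apply Cn_mult; auto. Qed.
Lemma smooth_opp f : smooth f -> smooth (fun x => - f x).
Proof. rewrite !smooth_Cn; intros; apply Cn_opp; auto. Qed.
Lemma smooth_minus f g : smooth f -> smooth g -> smooth (fun x => f x - g x).
Proof. intros; apply smooth_plus; auto; apply smooth_opp; auto. Qed.
Lemma smooth_inv u : smooth u -> (forall x, u x <> 0) -> smooth (fun x => / u x).
Proof. rewrite !smooth_Cn; intros; apply Cn_inv; auto. Qed.
Lemma smooth_div f u : smooth f -> smooth u -> (forall x, u x <> 0) -> smooth (fun x => f x / u x).
Proof. intros; apply smooth_mult; auto; apply smooth_inv; auto. Qed.
Lemma smooth_id : smooth (fun x => x).
Proof. intros n x. apply (ex_derive_n_pow n 1 x) || (eapply ex_derive_n_ext; [|apply (ex_derive_n_pow n 1 x)]; intro; simpl; ring). Qed.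
Lemma smooth_pow f n : smooth f -> smooth (fun x => f x ^ n).
Proof. intro H; induction n; simpl; [apply smooth_const|apply smooth_mult; auto]. Qed.

Lemma smooth_cont f x : smooth f -> continuous f x.
Proof. intro H; exact (ex_derive_continuous f x (smooth_ex f x H)). Qed.

Lemma periodic_D L g : smooth g -> periodic L g -> periodic L (Derive g).
Proof.
  intros Hs Hp x.
  assert (H1 : is_derive (fun y => g (y + L)) x (Derive g (x + L))).
  { auto_derive. apply smooth_ex; auto. rewrite Rmult_1_l; reflexivity. }
  apply is_derive_unique in H1.
  rewrite <- H1. apply Derive_ext. intro; apply Hp.
Qed.

Lemma Cinf_D L g : Cinf_per L g -> Cinf_per L (Derive g).
Proof. intros [H1 H2]; split; [apply smooth_D|apply periodic_D]; auto. Qed.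

Ltac etafix := repeat match goal with |- context [fun y : R => ?f y] => progress change (fun y : R => f y) with f end.

Definition ucs (c1 c2 : R -> R) := forall x, Derive c1 x ^ 2 + Derive c2 x ^ 2 = 1.

Lemma kap_eq c1 c2 x : ucs c1 c2 ->
  curvature c1 c2 x = Derive c1 x * Derive (Derive c2) x - Derive c2 x * Derive (Derive c1) x.
Proof.
  intro H. unfold curvature. rewrite H, sqrt_1.
  change (Derive_n c2 2 x) with (Derive (Derive c2) x).
  change (Derive_n c1 2 x) with (Derive (Derive c1) x). field.
Qed.

Lemma orth c1 c2 x : smooth c1 -> smooth c2 -> ucs c1 c2 ->
  Derive c1 x * Derive (Derive c1) x + Derive c2 x * Derive (Derive c2) x = 0.
Proof.
  intros H1 H2 H.
  assert (D : is_derive (fun y => Derive c1 y ^ 2 + Derive c2 y ^ 2) x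
     (2 * (Derive c1 x * Derive (Derive c1) x + Derive c2 x * Derive (Derive c2) x))).
  { auto_derive.
    - split; [apply smooth_ex, smooth_D; auto|split; [apply smooth_ex, smooth_D; auto|auto]].
    - simpl; etafix; ring. }
  assert (D2 : is_derive (fun y => Derive c1 y ^ 2 + Derive c2 y ^ 2) x 0).
  { eapply is_derive_ext; [intro t; symmetry; apply H|]. auto_derive; auto. }
  pose proof (is_derive_unique _ _ _ D) as E1.
  pose proof (is_derive_unique _ _ _ D2) as E2. rewrite E1 in E2. lra.
Qed.

Lemma u1_eq c1 c2 x : smooth c1 -> smooth c2 -> ucs c1 c2 ->
  Derive (Derive c1) x = - curvature c1 c2 x * Derive c2 x.
Proof.
  intros H1 H2 H. rewrite kap_eq by auto. pose proof (orth c1 c2 x H1 H2 H) as O.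
  pose proof (H x) as U.
  set (u := Derive c1 x) in *. set (v := Derive c2 x) in *.
  set (u1 := Derive (Derive c1) x) in *. set (v1 := Derive (Derive c2) x) in *.
  assert (E : u1 = u * (u*u1+v*v1) - v*(u*v1 - v*u1))
    by (transitivity (u1*(u^2+v^2)); [rewrite U; ring| ring]).
  rewrite E at 1. rewrite O. ring.
Qed.

Lemma v1_eq c1 c2 x : smooth c1 -> smooth c2 -> ucs c1 c2 ->
  Derive (Derive c2) x = curvature c1 c2 x * Derive c1 x.
Proof.
  intros H1 H2 H. rewrite kap_eq by auto. pose proof (orth c1 c2 x H1 H2 H) as O.
  pose proof (H x) as U.
  set (u := Derive c1 x) in *. set (v := Derive c2 x) in *.
  set (u1 := Derive (Derive c1) x) in *. set (v1 := Derive (Derive c2) x) in *.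
  assert (E : v1 = v * (u*u1+v*v1) + u*(u*v1 - v*u1))
    by (transitivity (v1*(u^2+v^2)); [rewrite U; ring| ring]).
  rewrite E at 1. rewrite O. ring.
Qed.

Lemma kap_smooth c1 c2 : smooth c1 -> smooth c2 -> ucs c1 c2 -> smooth (curvature c1 c2).
Proof.
  intros H1 H2 H. eapply smooth_ext; [intro x; symmetry; apply kap_eq; auto|].
  apply smooth_minus; apply smooth_mult;
    solve [auto | apply smooth_D; auto | apply smooth_D; apply smooth_D; auto].
Qed.

Lemma u2_eq c1 c2 x : smooth c1 -> smooth c2 -> ucs c1 c2 ->
  Derive (Derive (Derive c1)) x =
   - (Derive (curvature c1 c2) x * Derive c2 x + curvature c1 c2 x * (curvature c1 c2 x * Derive c1 x)).
Proof.
  intros H1 H2 H.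
  rewrite (Derive_ext (Derive (Derive c1)) (fun y => - curvature c1 c2 y * Derive c2 y) x) by (intro; apply u1_eq; auto).
  apply is_derive_unique. auto_derive.
  - split; [apply smooth_ex, kap_smooth; auto|split; [apply smooth_ex, smooth_D; auto|auto]].
  - etafix; rewrite (v1_eq c1 c2 x) by auto. ring.
Qed.

Lemma v2_eq c1 c2 x : smooth c1 -> smooth c2 -> ucs c1 c2 ->
  Derive (Derive (Derive c2)) x =
   Derive (curvature c1 c2) x * Derive c1 x + curvature c1 c2 x * (- curvature c1 c2 x * Derive c2 x).
Proof.
  intros H1 H2 H.
  rewrite (Derive_ext (Derive (Derive c2)) (fun y => curvature c1 c2 y * Derive c1 y) x) by (intro; apply v1_eq; auto).
  apply is_derive_unique. auto_derive.
  - split; [apply smooth_ex, kap_smooth; auto|split; [apply smooth_ex, smooth_D; auto|auto]].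
  - etafix; rewrite (u1_eq c1 c2 x) by auto. ring.
Qed.

Definition Psi (A w a N T : R) := (1 + A * (N / sqrt T ^ 3) ^ 2) * (w * a ^ 2 / sqrt T).
Definition TTf (k F F1 : R) := (1 - F * k) ^ 2 + F1 ^ 2.
Definition NNf (k k1 F F1 F2 : R) :=
  (1 - F * k) * ((1 - F * k) * k + F2) + 2 * k * F1 ^ 2 + F * F1 * k1.

Lemma alg_curv (u v k k1 F F1 F2 : R) : u ^ 2 + v ^ 2 = 1 ->
  let P1 := u - (F1 * v + F * (k * u)) in
  let P2 := v + (F1 * u + F * (- k * v)) in
  let Q1 := - k * v - (F2 * v + F1 * (k * u) + (F1 * (k * u) + F * (k1 * u + k * (- k * v)))) in
  let Q2 := k * u + (F2 * u + F1 * (- k * v) + (F1 * (- k * v) + F * (- (k1 * v + k * (k * u))))) in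
  P1 * Q2 - P2 * Q1 = NNf k k1 F F1 F2 /\ P1 ^ 2 + P2 ^ 2 = TTf k F F1.
Proof.
  intros U P1 P2 Q1 Q2. unfold NNf, TTf, P1, P2, Q1, Q2. split.
  - transitivity ((u^2+v^2) * ((1 - F * k) * ((1 - F * k) * k + F2) + 2 * k * F1 ^ 2 + F * F1 * k1)); [ring|rewrite U; ring].
  - transitivity ((u^2+v^2) * ((1 - F * k) ^ 2 + F1 ^ 2)); [ring|rewrite U; ring].
Qed.

Lemma curv_psi c1 c2 F x : smooth c1 -> smooth c2 -> ucs c1 c2 -> smooth F ->
  curvature (psi1 c1 c2 F) (psi2 c1 c2 F) x =
  NNf (curvature c1 c2 x) (Derive (curvature c1 c2) x) (F x) (Derive F x) (Derive (Derive F) x)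
   / sqrt (TTf (curvature c1 c2 x) (F x) (Derive F x)) ^ 3.
Proof.
  intros H1 H2 H HF.
  assert (E1 : forall y, Derive (psi1 c1 c2 F) y = Derive c1 y - (Derive F y * Derive c2 y + F y * Derive (Derive c2) y)).
  { intro y. apply is_derive_unique. unfold psi1. auto_derive.
    - repeat split; apply smooth_ex; solve [auto | apply smooth_D; auto | apply smooth_D; apply smooth_D; auto].
    - etafix; ring. }
  assert (E2 : forall y, Derive (psi2 c1 c2 F) y = Derive c2 y + (Derive F y * Derive c1 y + F y * Derive (Derive c1) y)).
  { intro y. apply is_derive_unique. unfold psi2. auto_derive.
    - repeat split; apply smooth_ex; solve [auto | apply smooth_D; auto | apply smooth_D; apply smooth_D; auto].
    - etafix; ring. }
  assert (E1' : Derive (Derive (psi1 c1 c2 F)) x = Derive (Derive c1) x - (Derive (Derive F) x * Derive c2 x + Derive F x * Derive (Derive c2) x + (Derive F x * Derive (Derive c2) x + F x * Derive (Derive (Derive c2)) x))).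
  { rewrite (Derive_ext _ _ _ E1). apply is_derive_unique. auto_derive.
    - repeat split; apply smooth_ex; solve [auto | apply smooth_D; auto | apply smooth_D; apply smooth_D; auto].
    - etafix; ring. }
  assert (E2' : Derive (Derive (psi2 c1 c2 F)) x = Derive (Derive c2) x + (Derive (Derive F) x * Derive c1 x + Derive F x * Derive (Derive c1) x + (Derive F x * Derive (Derive c1) x + F x * Derive (Derive (Derive c1)) x))).
  { rewrite (Derive_ext _ _ _ E2). apply is_derive_unique. auto_derive.
    - repeat split; apply smooth_ex; solve [auto | apply smooth_D; auto | apply smooth_D; apply smooth_D; auto].
    - etafix; ring. }
  unfold curvature at 1. change (Derive_n (psi2 c1 c2 F) 2 x) with (Derive (Derive (psi2 c1 c2 F)) x).
  change (Derive_n (psi1 c1 c2 F) 2 x) with (Derive (Derive (psi1 c1 c2 F)) x).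
  rewrite E1', E2', E1, E2.
  rewrite (u2_eq c1 c2 x), (v2_eq c1 c2 x), (u1_eq c1 c2 x), (v1_eq c1 c2 x) by auto.
  destruct (alg_curv (Derive c1 x) (Derive c2 x) (curvature c1 c2 x) (Derive (curvature c1 c2) x)
      (F x) (Derive F x) (Derive (Derive F) x) (H x)) as [N1 N2].
  rewrite <- N1, <- N2. reflexivity.
Qed.

Lemma Gmet_pt A L c1 c2 F h k : smooth c1 -> smooth c2 -> ucs c1 c2 -> smooth F ->
  Gmet A L c1 c2 F h k = RInt (fun x => Psi A (h x * k x) (1 - F x * curvature c1 c2 x)
     (NNf (curvature c1 c2 x) (Derive (curvature c1 c2) x) (F x) (Derive F x) (Derive (Derive F) x))
     (TTf (curvature c1 c2 x) (F x) (Derive F x))) 0 L.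
Proof.
  intros H1 H2 H HF. unfold Gmet, circ_int. apply RInt_ext. intros x _.
  unfold Psi. rewrite curv_psi by auto. reflexivity.
Qed.

Definition Psi_a (A w a N T : R) := 2*w*a*(/sqrt T + A*N^2/sqrt T^7).
Definition Psi_N (A w a N T : R) := 2*w*a^2*A*N/sqrt T^7.
Definition Psi_T (A w a N T : R) := w*a^2*(-(1/2)/sqrt T^3 - (7/2)*A*N^2/sqrt T^9).
Definition Psi_aa (A w a N T : R) := 2*w*(/sqrt T + A*N^2/sqrt T^7).
Definition Psi_aN (A w a N T : R) := 4*w*a*A*N/sqrt T^7.
Definition Psi_aT (A w a N T : R) := 2*w*a*(-(1/2)/sqrt T^3 - (7/2)*A*N^2/sqrt T^9).
Definition Psi_NN (A w a N T : R) := 2*w*a^2*A/sqrt T^7.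
Definition Psi_NT (A w a N T : R) := -7*w*a^2*A*N/sqrt T^9.
Definition Psi_TT (A w a N T : R) := w*a^2*((3/4)/sqrt T^5 + (63/4)*A*N^2/sqrt T^11).

Ltac nzt := repeat first [assumption | apply Rmult_integral_contrapositive_currified | lra].

Ltac dfix fa z Ha := replace (Derive (fun x => fa x) z) with (_ : R) by (symmetry; apply (is_derive_unique _ _ _ Ha)).

Lemma chain_Psi (A w : R) (fa fN fT : R -> R) (z da dN dT : R) :
  is_derive fa z da -> is_derive fN z dN -> is_derive fT z dT -> 0 < fT z ->
  is_derive (fun y => Psi A w (fa y) (fN y) (fT y)) z
   (Psi_a A w (fa z) (fN z) (fT z) * da + Psi_N A w (fa z) (fN z) (fT z) * dN + Psi_T A w (fa z) (fN z) (fT z) * dT).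
Proof.
  intros Ha HN HT HTp. unfold Psi, Psi_a, Psi_N, Psi_T.
  auto_derive.
  all: assert (Hr : sqrt (fT z) <> 0) by (apply Rgt_not_eq, sqrt_lt_R0; lra).
  all: try (repeat split; try (eexists; eassumption); try lra; nzt; fail).
  replace (Derive (fun x : R => fa x) z) with da by (symmetry; apply is_derive_unique; exact Ha).
  replace (Derive (fun x : R => fN x) z) with dN by (symmetry; apply is_derive_unique; exact HN).
  replace (Derive (fun x : R => fT x) z) with dT by (symmetry; apply is_derive_unique; exact HT).
  set (r := sqrt (fT z)) in *. field. auto.
Qed.

Lemma chain_Psi_a (A w : R) (fa fN fT : R -> R) (z da dN dT : R) :
  is_derive fa z da -> is_derive fN z dN -> is_derive fT z dT -> 0 < fT z ->
  is_derive (fun y => Psi_a A w (fa y) (fN y) (fT y)) z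
   (Psi_aa A w (fa z) (fN z) (fT z) * da + Psi_aN A w (fa z) (fN z) (fT z) * dN + Psi_aT A w (fa z) (fN z) (fT z) * dT).
Proof.
  intros Ha HN HT HTp. unfold Psi_a, Psi_N, Psi_T, Psi_aa, Psi_aN, Psi_aT, Psi_NN, Psi_NT, Psi_TT.
  auto_derive.
  all: assert (Hr : sqrt (fT z) <> 0) by (apply Rgt_not_eq, sqrt_lt_R0; lra).
  all: try (repeat split; try (eexists; eassumption); try lra; nzt; fail).
  replace (Derive (fun x : R => fa x) z) with da by (symmetry; apply is_derive_unique; exact Ha).
  replace (Derive (fun x : R => fN x) z) with dN by (symmetry; apply is_derive_unique; exact HN).
  replace (Derive (fun x : R => fT x) z) with dT by (symmetry; apply is_derive_unique; exact HT).
  set (r := sqrt (fT z)) in *. field. auto.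
Qed.

Lemma chain_Psi_N (A w : R) (fa fN fT : R -> R) (z da dN dT : R) :
  is_derive fa z da -> is_derive fN z dN -> is_derive fT z dT -> 0 < fT z ->
  is_derive (fun y => Psi_N A w (fa y) (fN y) (fT y)) z
   (Psi_aN A w (fa z) (fN z) (fT z) * da + Psi_NN A w (fa z) (fN z) (fT z) * dN + Psi_NT A w (fa z) (fN z) (fT z) * dT).
Proof.
  intros Ha HN HT HTp. unfold Psi_a, Psi_N, Psi_T, Psi_aa, Psi_aN, Psi_aT, Psi_NN, Psi_NT, Psi_TT.
  auto_derive.
  all: assert (Hr : sqrt (fT z) <> 0) by (apply Rgt_not_eq, sqrt_lt_R0; lra).
  all: try (repeat split; try (eexists; eassumption); try lra; nzt; fail).
  replace (Derive (fun x : R => fa x) z) with da by (symmetry; apply is_derive_unique; exact Ha).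
  replace (Derive (fun x : R => fN x) z) with dN by (symmetry; apply is_derive_unique; exact HN).
  replace (Derive (fun x : R => fT x) z) with dT by (symmetry; apply is_derive_unique; exact HT).
  set (r := sqrt (fT z)) in *. field. auto.
Qed.

Lemma chain_Psi_T (A w : R) (fa fN fT : R -> R) (z da dN dT : R) :
  is_derive fa z da -> is_derive fN z dN -> is_derive fT z dT -> 0 < fT z ->
  is_derive (fun y => Psi_T A w (fa y) (fN y) (fT y)) z
   (Psi_aT A w (fa z) (fN z) (fT z) * da + Psi_NT A w (fa z) (fN z) (fT z) * dN + Psi_TT A w (fa z) (fN z) (fT z) * dT).
Proof.
  intros Ha HN HT HTp. unfold Psi_a, Psi_N, Psi_T, Psi_aa, Psi_aN, Psi_aT, Psi_NN, Psi_NT, Psi_TT.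
  auto_derive.
  all: assert (Hr : sqrt (fT z) <> 0) by (apply Rgt_not_eq, sqrt_lt_R0; lra).
  all: try (repeat split; try (eexists; eassumption); try lra; nzt; fail).
  replace (Derive (fun x : R => fa x) z) with da by (symmetry; apply is_derive_unique; exact Ha).
  replace (Derive (fun x : R => fN x) z) with dN by (symmetry; apply is_derive_unique; exact HN).
  replace (Derive (fun x : R => fT x) z) with dT by (symmetry; apply is_derive_unique; exact HT).
  set (r := sqrt (fT z)) in *. field. auto.
Qed.

Record pj := mkpj { pk : R; pk1 : R; pw : R; pm0 : R; pm1 : R; pm2 : R; pl0 : R; pl1 : R; pl2 : R }.

Definition Fv (p q s t : R) := s * p + t * q.
Definition av (j : pj) s t := 1 - Fv (pm0 j) (pl0 j) s t * pk j.
Definition Tv (j : pj) s t := TTf (pk j) (Fv (pm0 j) (pl0 j) s t) (Fv (pm1 j) (pl1 j) s t).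
Definition Nv (j : pj) s t := NNf (pk j) (pk1 j) (Fv (pm0 j) (pl0 j) s t) (Fv (pm1 j) (pl1 j) s t) (Fv (pm2 j) (pl2 j) s t).
Definition Tdir (j : pj) (p0 p1 : R) s t := 2 * av j s t * (- p0 * pk j) + 2 * Fv (pm1 j) (pl1 j) s t * p1.
Definition Ndir (j : pj) (p0 p1 p2 : R) s t :=
  (- p0 * pk j) * (av j s t * pk j + Fv (pm2 j) (pl2 j) s t) + av j s t * ((- p0 * pk j) * pk j + p2)
  + 4 * pk j * Fv (pm1 j) (pl1 j) s t * p1 + (p0 * Fv (pm1 j) (pl1 j) s t + Fv (pm0 j) (pl0 j) s t * p1) * pk1 j.
Definition Tst (j : pj) := 2 * (- pm0 j * pk j) * (- pl0 j * pk j) + 2 * pm1 j * pl1 j.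
Definition Nst (j : pj) :=
  (- pl0 j * pk j) * ((- pm0 j * pk j) * pk j + pm2 j) + (- pm0 j * pk j) * ((- pl0 j * pk j) * pk j + pl2 j)
  + 4 * pk j * pm1 j * pl1 j + (pl0 j * pm1 j + pm0 j * pl1 j) * pk1 j.

Definition Iv A (j : pj) s t := Psi A (pw j) (av j s t) (Nv j s t) (Tv j s t).
Definition Gt A (j : pj) s t :=
  Psi_a A (pw j) (av j s t) (Nv j s t) (Tv j s t) * (- pl0 j * pk j)
  + Psi_N A (pw j) (av j s t) (Nv j s t) (Tv j s t) * Ndir j (pl0 j) (pl1 j) (pl2 j) s t
  + Psi_T A (pw j) (av j s t) (Nv j s t) (Tv j s t) * Tdir j (pl0 j) (pl1 j) s t.
Definition Gst A (j : pj) s :=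
  let a := av j s 0 in let N := Nv j s 0 in let T := Tv j s 0 in let w := pw j in
  let as_ := - pm0 j * pk j in let Ns := Ndir j (pm0 j) (pm1 j) (pm2 j) s 0 in let Ts := Tdir j (pm0 j) (pm1 j) s 0 in
  (Psi_aa A w a N T * as_ + Psi_aN A w a N T * Ns + Psi_aT A w a N T * Ts) * (- pl0 j * pk j)
  + ((Psi_aN A w a N T * as_ + Psi_NN A w a N T * Ns + Psi_NT A w a N T * Ts) * Ndir j (pl0 j) (pl1 j) (pl2 j) s 0
     + Psi_N A w a N T * Nst j)
  + ((Psi_aT A w a N T * as_ + Psi_NT A w a N T * Ns + Psi_TT A w a N T * Ts) * Tdir j (pl0 j) (pl1 j) s 0
     + Psi_T A w a N T * Tst j).

Lemma av_dt j s t : is_derive (fun t => av j s t) t (- pl0 j * pk j).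
Proof. unfold av, Fv. auto_derive; auto; ring. Qed.
Lemma Tv_dt j s t : is_derive (fun t => Tv j s t) t (Tdir j (pl0 j) (pl1 j) s t).
Proof. unfold Tv, Tdir, TTf, av, Fv. auto_derive; auto; ring. Qed.
Lemma Nv_dt j s t : is_derive (fun t => Nv j s t) t (Ndir j (pl0 j) (pl1 j) (pl2 j) s t).
Proof. unfold Nv, Ndir, NNf, av, Fv. auto_derive; auto; ring. Qed.
Lemma av_ds j s t : is_derive (fun s => av j s t) s (- pm0 j * pk j).
Proof. unfold av, Fv. auto_derive; auto; ring. Qed.
Lemma Tv_ds j s t : is_derive (fun s => Tv j s t) s (Tdir j (pm0 j) (pm1 j) s t).
Proof. unfold Tv, Tdir, TTf, av, Fv. auto_derive; auto; ring. Qed.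
Lemma Nv_ds j s t : is_derive (fun s => Nv j s t) s (Ndir j (pm0 j) (pm1 j) (pm2 j) s t).
Proof. unfold Nv, Ndir, NNf, av, Fv. auto_derive; auto; ring. Qed.
Lemma Tdir_ds j s : is_derive (fun s => Tdir j (pl0 j) (pl1 j) s 0) s (Tst j).
Proof. unfold Tdir, Tst, av, Fv. auto_derive; auto; ring. Qed.
Lemma Ndir_ds j s : is_derive (fun s => Ndir j (pl0 j) (pl1 j) (pl2 j) s 0) s (Nst j).
Proof. unfold Ndir, Nst, av, Fv. auto_derive; auto; ring. Qed.

Lemma Iv_dt A j s t : 0 < Tv j s t -> is_derive (fun t => Iv A j s t) t (Gt A j s t).
Proof.
  intro HT. unfold Iv, Gt.
  apply (chain_Psi A (pw j) (fun t => av j s t) (fun t => Nv j s t) (fun t => Tv j s t)); auto.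
  apply av_dt. apply Nv_dt. apply Tv_dt.
Qed.

Lemma deriv3 (f1 g1 f2 g2 f3 g3 : R -> R) z df1 dg1 df2 dg2 df3 dg3 :
  is_derive f1 z df1 -> is_derive g1 z dg1 -> is_derive f2 z df2 -> is_derive g2 z dg2 ->
  is_derive f3 z df3 -> is_derive g3 z dg3 ->
  is_derive (fun y => f1 y * g1 y + f2 y * g2 y + f3 y * g3 y) z
   (df1 * g1 z + (df2 * g2 z + f2 z * dg2) + (df3 * g3 z + f3 z * dg3) + f1 z * dg1).
Proof.
  intros H1 H2 H3 H4 H5 H6.
  auto_derive; [repeat split; eexists; eassumption|].
  replace (Derive (fun x : R => f1 x) z) with df1 by (symmetry; apply is_derive_unique; exact H1).
  replace (Derive (fun x : R => g1 x) z) with dg1 by (symmetry; apply is_derive_unique; exact H2).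
  replace (Derive (fun x : R => f2 x) z) with df2 by (symmetry; apply is_derive_unique; exact H3).
  replace (Derive (fun x : R => g2 x) z) with dg2 by (symmetry; apply is_derive_unique; exact H4).
  replace (Derive (fun x : R => f3 x) z) with df3 by (symmetry; apply is_derive_unique; exact H5).
  replace (Derive (fun x : R => g3 x) z) with dg3 by (symmetry; apply is_derive_unique; exact H6).
  ring.
Qed.

Lemma Gt_ds A j s : 0 < Tv j s 0 -> is_derive (fun s => Gt A j s 0) s (Gst A j s + Psi_a A (pw j) (av j s 0) (Nv j s 0) (Tv j s 0) * 0).
Proof.
  intro HT. unfold Gt, Gst.
  apply (deriv3 (fun s => Psi_a A (pw j) (av j s 0) (Nv j s 0) (Tv j s 0)) (fun _ => - pl0 j * pk j)
                (fun s => Psi_N A (pw j) (av j s 0) (Nv j s 0) (Tv j s 0)) (fun s => Ndir j (pl0 j) (pl1 j) (pl2 j) s 0)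
                (fun s => Psi_T A (pw j) (av j s 0) (Nv j s 0) (Tv j s 0)) (fun s => Tdir j (pl0 j) (pl1 j) s 0)).
  - apply (chain_Psi_a A (pw j) (fun s => av j s 0) (fun s => Nv j s 0) (fun s => Tv j s 0)); auto.
    apply av_ds. apply Nv_ds. apply Tv_ds.
  - auto_derive; auto.
  - apply (chain_Psi_N A (pw j) (fun s => av j s 0) (fun s => Nv j s 0) (fun s => Tv j s 0)); auto.
    apply av_ds. apply Nv_ds. apply Tv_ds.
  - apply Ndir_ds.
  - apply (chain_Psi_T A (pw j) (fun s => av j s 0) (fun s => Nv j s 0) (fun s => Tv j s 0)); auto.
    apply av_ds. apply Nv_ds. apply Tv_ds.
  - apply Tdir_ds.
Qed.

Lemma Gt_ds' A j s : 0 < Tv j s 0 -> is_derive (fun s => Gt A j s 0) s (Gst A j s).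
Proof. intro HT. eapply is_derive_ext; [intro; reflexivity|]. pose proof (Gt_ds A j s HT) as H.
  rewrite Rmult_0_r, Rplus_0_r in H. exact H. Qed.

Definition D1 A (j : pj) := pw j * (- pk j * pl0 j + A * pk j ^ 3 * pl0 j + 2 * A * pk j * pl2 j).

Lemma Gt00 A j : Gt A j 0 0 = D1 A j.
Proof.
  unfold Gt, D1, Psi_a, Psi_N, Psi_T.
  replace (av j 0 0) with 1 by (unfold av, Fv; ring).
  replace (Tv j 0 0) with 1 by (unfold Tv, TTf, Fv; ring).
  replace (Nv j 0 0) with (pk j) by (unfold Nv, NNf, Fv; ring).
  unfold Ndir, Tdir, av, Fv. rewrite sqrt_1. field.
Qed.

Definition D2 A (j : pj) :=
  let k := pk j in
  let as_ := - pm0 j * k in let at_ := - pl0 j * k in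
  let Ts := -2 * pm0 j * k in let Tt := -2 * pl0 j * k in
  let Ns := pm2 j - 2 * k^2 * pm0 j in let Nt := pl2 j - 2 * k^2 * pl0 j in
  pw j * ( 2*(1 + A*k^2) * as_ * at_ + 4*A*k * (as_*Nt + Ns*at_) + (-1 - 7*A*k^2) * (as_*Tt + Ts*at_)
         + 2*A*Ns*Nt + (-7*A*k) * (Ns*Tt + Ts*Nt) + (3/4 + 63/4*A*k^2) * Ts * Tt
         + 2*A*k * Nst j + (-1/2 - 7/2*A*k^2) * Tst j).

Lemma Gst0 A j : Gst A j 0 = D2 A j.
Proof.
  unfold Gst, D2, Psi_a, Psi_N, Psi_T, Psi_aa, Psi_aN, Psi_aT, Psi_NN, Psi_NT, Psi_TT.
  replace (av j 0 0) with 1 by (unfold av, Fv; ring).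
  replace (Tv j 0 0) with 1 by (unfold Tv, TTf, Fv; ring).
  replace (Nv j 0 0) with (pk j) by (unfold Nv, NNf, Fv; ring).
  unfold Ndir, Tdir, av, Fv. rewrite sqrt_1. field.
Qed.

Lemma cont_pt_smooth f x : smooth f -> continuity_pt f x.
Proof. intro H. apply continuity_pt_filterlim. apply smooth_cont, H. Qed.

Ltac c2d_side :=
  first [ apply cont_pt_smooth; assumption
        | apply continuity_pt_sqrt; cbv beta; unfold TTf; apply Rplus_le_le_0_compat; apply pow2_ge_0
        | apply (derivable_continuous_pt (fun y => y ^ _)); apply derivable_pt_pow ].

Ltac c2d :=
  repeat match goal with
  | |- continuity_2d_pt (fun u v => @?f u v + @?g u v) _ _ => apply (continuity_2d_pt_plus f g)
  | |- continuity_2d_pt (fun u v => @?f u v - @?g u v) _ _ => apply (continuity_2d_pt_minus f g)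
  | |- continuity_2d_pt (fun u v => @?f u v * @?g u v) _ _ => apply (continuity_2d_pt_mult f g)
  | |- continuity_2d_pt (fun u v => @?f u v / @?g u v) _ _ =>
       apply (continuity_2d_pt_mult f (fun u v => / g u v))
  | |- continuity_2d_pt (fun u v => - @?f u v) _ _ => apply (continuity_2d_pt_opp f)
  | |- continuity_2d_pt (fun u v => / @?f u v) _ _ => apply (continuity_2d_pt_inv f)
  | |- continuity_2d_pt (fun u v => (@?f u v) ^ ?n) _ _ =>
       apply (continuity_1d_2d_pt_comp (fun y => y ^ n) f); [c2d_side|]
  | |- continuity_2d_pt (fun u v => sqrt (@?f u v)) _ _ =>
       apply (continuity_1d_2d_pt_comp sqrt f); [c2d_side|]
  | |- continuity_2d_pt (fun u v => TTf (@?a u v) (@?b u v) (@?c u v)) _ _ => unfold TTf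
  | |- continuity_2d_pt (fun u v => NNf (@?a u v) (@?b u v) (@?c u v) (@?d u v) (@?e u v)) _ _ => unfold NNf
  | |- continuity_2d_pt (fun u v => Fv (@?a u v) (@?b u v) (@?c u v) (@?d u v)) _ _ => unfold Fv
  | |- continuity_2d_pt (fun u v => u) _ _ => apply continuity_2d_pt_id1
  | |- continuity_2d_pt (fun u v => v) _ _ => apply continuity_2d_pt_id2
  | |- continuity_2d_pt (fun u v => ?c) _ _ => apply continuity_2d_pt_const
  | |- continuity_2d_pt (fun u v => ?f v) _ _ =>
       apply (continuity_1d_2d_pt_comp f (fun u v => v)); [c2d_side|apply continuity_2d_pt_id2]
  end.

Ltac nz_side :=
  first [ lra
        | apply pow_nonzero; nz_side
        | apply Rgt_not_eq, sqrt_lt_R0; match goal with H : 0 < Tv _ _ _ |- _ => exact H end ].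

Definition jx (c1 c2 m l h k : R -> R) (x : R) : pj :=
  mkpj (curvature c1 c2 x) (Derive (curvature c1 c2) x) (h x * k x) (m x) (Derive m x) (Derive (Derive m) x)
       (l x) (Derive l x) (Derive (Derive l) x).

Lemma cont_Iv A c1 c2 m l h k s t0 x0 :
  smooth (curvature c1 c2) -> smooth (Derive (curvature c1 c2)) -> smooth h -> smooth k ->
  smooth m -> smooth (Derive m) -> smooth (Derive (Derive m)) ->
  smooth l -> smooth (Derive l) -> smooth (Derive (Derive l)) ->
  0 < Tv (jx c1 c2 m l h k x0) s t0 ->
  continuity_2d_pt (fun u v => Iv A (jx c1 c2 m l h k v) s u) t0 x0.
Proof.
  intros. unfold Iv, Gt, Gst, Psi, Psi_a, Psi_N, Psi_T, Psi_aa, Psi_aN, Psi_aT, Psi_NN, Psi_NT, Psi_TT,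
    Nst, Tst, Ndir, Tdir, Nv, Tv, av, jx; cbv zeta; cbn [pk pk1 pw pm0 pm1 pm2 pl0 pl1 pl2].
  c2d.
  all: nz_side.
Qed.

Lemma cont_Gt A c1 c2 m l h k s t0 x0 :
  smooth (curvature c1 c2) -> smooth (Derive (curvature c1 c2)) -> smooth h -> smooth k ->
  smooth m -> smooth (Derive m) -> smooth (Derive (Derive m)) ->
  smooth l -> smooth (Derive l) -> smooth (Derive (Derive l)) ->
  0 < Tv (jx c1 c2 m l h k x0) s t0 ->
  continuity_2d_pt (fun u v => Gt A (jx c1 c2 m l h k v) s u) t0 x0.
Proof.
  intros. unfold Iv, Gt, Gst, Psi, Psi_a, Psi_N, Psi_T, Psi_aa, Psi_aN, Psi_aT, Psi_NN, Psi_NT, Psi_TT,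
    Nst, Tst, Ndir, Tdir, Nv, Tv, av, jx; cbv zeta; cbn [pk pk1 pw pm0 pm1 pm2 pl0 pl1 pl2].
  c2d.
  all: nz_side.
Qed.

Lemma cont_Gt2 A c1 c2 m l h k s0 x0 :
  smooth (curvature c1 c2) -> smooth (Derive (curvature c1 c2)) -> smooth h -> smooth k ->
  smooth m -> smooth (Derive m) -> smooth (Derive (Derive m)) ->
  smooth l -> smooth (Derive l) -> smooth (Derive (Derive l)) ->
  0 < Tv (jx c1 c2 m l h k x0) s0 0 ->
  continuity_2d_pt (fun u v => Gt A (jx c1 c2 m l h k v) u 0) s0 x0.
Proof.
  intros. unfold Iv, Gt, Gst, Psi, Psi_a, Psi_N, Psi_T, Psi_aa, Psi_aN, Psi_aT, Psi_NN, Psi_NT, Psi_TT,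
    Nst, Tst, Ndir, Tdir, Nv, Tv, av, jx; cbv zeta; cbn [pk pk1 pw pm0 pm1 pm2 pl0 pl1 pl2].
  c2d.
  all: nz_side.
Qed.

Lemma cont_Gst A c1 c2 m l h k s0 x0 :
  smooth (curvature c1 c2) -> smooth (Derive (curvature c1 c2)) -> smooth h -> smooth k ->
  smooth m -> smooth (Derive m) -> smooth (Derive (Derive m)) ->
  smooth l -> smooth (Derive l) -> smooth (Derive (Derive l)) ->
  0 < Tv (jx c1 c2 m l h k x0) s0 0 ->
  continuity_2d_pt (fun u v => Gst A (jx c1 c2 m l h k v) u) s0 x0.
Proof.
  intros. unfold Iv, Gt, Gst, Psi, Psi_a, Psi_N, Psi_T, Psi_aa, Psi_aN, Psi_aT, Psi_NN, Psi_NT, Psi_TT,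
    Nst, Tst, Ndir, Tdir, Nv, Tv, av, jx; cbv zeta; cbn [pk pk1 pw pm0 pm1 pm2 pl0 pl1 pl2].
  c2d.
  all: nz_side.
Qed.

Lemma locally_R (P : R -> Prop) x d : 0 < d -> (forall y, Rabs (y - x) < d -> P y) -> locally x P.
Proof. intros Hd H. exists (mkposreal d Hd). intros y Hy. apply H. exact Hy. Qed.

Lemma cont2d_1d f u x : continuity_2d_pt f u x -> continuous (fun v => f u v) x.
Proof.
  intro H. apply continuity_pt_filterlim.
  unfold continuity_pt, continue_in, limit1_in, limit_in. intros eps Heps.
  destruct (H (mkposreal eps Heps)) as [d Hd].
  exists d. split; [apply cond_pos|]. intros y [_ Hy]. simpl in *. unfold R_dist in *.
  apply (Hd u y). rewrite Rminus_diag, Rabs_R0. apply cond_pos. exact Hy.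
Qed.

Definition Hyp (c1 c2 m l h k : R -> R) :=
  smooth c1 /\ smooth c2 /\ ucs c1 c2 /\ smooth m /\ smooth l /\ smooth h /\ smooth k.

Ltac prep H :=
  let H1 := fresh "Hc1" in let H2 := fresh "Hc2" in let H3 := fresh "Hu" in
  let Hm := fresh "Hm" in let Hl := fresh "Hl" in let Hh := fresh "Hh" in let Hk := fresh "Hk" in
  destruct H as (H1 & H2 & H3 & Hm & Hl & Hh & Hk);
  let K := fresh "HK" in assert (K := kap_smooth _ _ H1 H2 H3);
  let K1 := fresh "HK1" in assert (K1 := smooth_D _ K);
  let K2 := fresh "HK2" in assert (K2 := smooth_D _ K1);
  let M1 := fresh "Hm1" in assert (M1 := smooth_D _ Hm);
  let M2 := fresh "Hm2" in assert (M2 := smooth_D _ M1);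
  let L1 := fresh "Hl1" in assert (L1 := smooth_D _ Hl);
  let L2 := fresh "Hl2" in assert (L2 := smooth_D _ L1);
  let h1 := fresh "Hh1" in assert (h1 := smooth_D _ Hh);
  let k1 := fresh "Hk1" in assert (k1 := smooth_D _ Hk).

Lemma Tbound c1 c2 m l h k L : Hyp c1 c2 m l h k -> 0 < L ->
  exists d, 0 < d /\ forall s t x, Rabs s < d -> Rabs t < d -> -1 <= x <= L + 1 ->
    0 < Tv (jx c1 c2 m l h k x) s t.
Proof.
  intros H HL. prep H.
  set (b := fun x => Rabs (m x * curvature c1 c2 x) + Rabs (l x * curvature c1 c2 x)).
  destruct (continuity_ab_maj b (-1) (L+1)) as [Mx [HM _]]; [lra| |].
  { intros c _. unfold b. apply continuity_pt_plus.
    - apply (continuity_pt_comp (fun x => m x * curvature c1 c2 x) Rabs).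
      apply continuity_pt_mult; apply cont_pt_smooth; auto. apply Rcontinuity_abs.
    - apply (continuity_pt_comp (fun x => l x * curvature c1 c2 x) Rabs).
      apply continuity_pt_mult; apply cont_pt_smooth; auto. apply Rcontinuity_abs. }
  set (B := b Mx).
  assert (HB : 0 <= B) by (unfold B, b; pose proof (Rabs_pos (m Mx * curvature c1 c2 Mx));
     pose proof (Rabs_pos (l Mx * curvature c1 c2 Mx)); lra).
  exists (/ (4 * (B + 1))). split; [apply Rinv_0_lt_compat; lra|].
  intros s t x Hs Ht Hx.
  pose proof (HM x Hx) as Hbx. fold B in Hbx. unfold b in Hbx.
  unfold Tv, TTf, jx, Fv; cbn [pk pk1 pw pm0 pm1 pm2 pl0 pl1 pl2].
  set (X := (s * m x + t * l x) * curvature c1 c2 x).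
  assert (HX : Rabs X <= Rabs s * Rabs (m x * curvature c1 c2 x) + Rabs t * Rabs (l x * curvature c1 c2 x)).
  { unfold X. replace ((s * m x + t * l x) * curvature c1 c2 x) with
      (s * (m x * curvature c1 c2 x) + t * (l x * curvature c1 c2 x)) by ring.
    eapply Rle_trans; [apply Rabs_triang|]. rewrite !Rabs_mult. lra. }
  assert (Hd : / (4 * (B + 1)) * (B + 1) = / 4) by (field; lra).
  assert (HX2 : Rabs X < / 2).
  { pose proof (Rabs_pos s). pose proof (Rabs_pos t).
    pose proof (Rabs_pos (m x * curvature c1 c2 x)). pose proof (Rabs_pos (l x * curvature c1 c2 x)).
    assert (Rabs s * Rabs (m x * curvature c1 c2 x) <= / (4 * (B + 1)) * B) by
      (apply Rmult_le_compat; lra).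
    assert (Rabs t * Rabs (l x * curvature c1 c2 x) <= / (4 * (B + 1)) * B) by
      (apply Rmult_le_compat; lra).
    assert (/ (4 * (B + 1)) * B < / 4) by (rewrite <- Hd; apply Rmult_lt_compat_l; [apply Rinv_0_lt_compat|]; lra).
    lra. }
  assert (1 - X > / 2) by (pose proof (Rle_abs X); lra).
  pose proof (pow2_ge_0 (s * Derive m x + t * Derive l x)). nra.
Qed.

Lemma Gmet_var A L c1 c2 m l h k s t : Hyp c1 c2 m l h k ->
  Gmet A L c1 c2 (fun x => (fun x => (fun _ : R => 0) x + s * m x) x + t * l x) h k
  = RInt (fun x => Iv A (jx c1 c2 m l h k x) s t) 0 L.
Proof.
  intro H. pose proof H as H0. prep H.
  set (F := (fun x => (fun x => (fun _ : R => 0) x + s * m x) x + t * l x)).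
  assert (HF : smooth F).
  { apply (smooth_ext (fun x => s * m x + t * l x)); [intro; unfold F; ring|].
    apply smooth_plus; apply smooth_mult; auto; apply smooth_const. }
  assert (DF : forall y, Derive F y = s * Derive m y + t * Derive l y).
  { intro y. apply is_derive_unique. unfold F. auto_derive.
    - repeat split; apply smooth_ex; auto.
    - etafix; ring. }
  assert (DDF : forall y, Derive (Derive F) y = s * Derive (Derive m) y + t * Derive (Derive l) y).
  { intro y. rewrite (Derive_ext _ _ y DF). apply is_derive_unique. auto_derive.
    - repeat split; apply smooth_ex; auto.
    - etafix; ring. }
  rewrite Gmet_pt by auto. apply RInt_ext. intros x _. rewrite DDF, DF.
  unfold Iv, av, Nv, Tv, Fv, jx; cbn [pk pk1 pw pm0 pm1 pm2 pl0 pl1 pl2].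
  unfold F. cbv beta. replace (0 + s * m x + t * l x) with (s * m x + t * l x) by ring. reflexivity.
Qed.

Ltac minmax HL := rewrite ?Rmin_left, ?Rmax_right in * by lra.

Lemma dG_var A L c1 c2 m l h k d : Hyp c1 c2 m l h k -> 0 < L -> 0 < d ->
  (forall s t x, Rabs s < d -> Rabs t < d -> -1 <= x <= L + 1 -> 0 < Tv (jx c1 c2 m l h k x) s t) ->
  forall s, Rabs s < d ->
  dG A L c1 c2 (fun x => (fun _ : R => 0) x + s * m x) l h k = RInt (fun x => Gt A (jx c1 c2 m l h k x) s 0) 0 L.
Proof.
  intros H HL Hd HT s Hs. pose proof H as H0. prep H.
  unfold dG.
  rewrite (Derive_ext _ (fun t => RInt (fun x => Iv A (jx c1 c2 m l h k x) s t) 0 L) 0)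
    by (intro t; apply Gmet_var; auto).
  assert (E : RInt (fun x => Gt A (jx c1 c2 m l h k x) s 0) 0 L =
              RInt (fun x => Derive (fun u => Iv A (jx c1 c2 m l h k x) s u) 0) 0 L).
  { apply RInt_ext. intros x Hx. minmax HL. symmetry. apply is_derive_unique. apply Iv_dt.
    apply HT; auto; rewrite ?Rabs_R0; lra. }
  rewrite E. apply is_derive_unique.
  apply (is_derive_RInt_param (fun u x => Iv A (jx c1 c2 m l h k x) s u)).
  - apply (locally_R _ 0 d Hd). intros y Hy x Hx. minmax HL. eexists. apply Iv_dt.
    apply HT; auto. rewrite Rminus_0_r in Hy; auto. lra.
  - intros x Hx. minmax HL.
    apply (continuity_2d_pt_ext_loc (fun u v => Gt A (jx c1 c2 m l h k v) s u)).
    + exists (mkposreal (Rmin d 1) ltac:(apply Rmin_pos; lra)). intros u v Hu0 Hv0. simpl in Hu0, Hv0.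
      symmetry. apply is_derive_unique. apply Iv_dt. apply HT; auto.
      * rewrite Rminus_0_r in Hu0. pose proof (Rmin_l d 1). lra.
      * pose proof (Rmin_r d 1). apply Rabs_def2 in Hv0. lra.
    + apply cont_Gt; auto. apply HT; auto. rewrite Rabs_R0; lra. lra.
  - apply (locally_R _ 0 d Hd). intros y Hy. apply (@ex_RInt_continuous R_CompleteNormedModule). intros z Hz. minmax HL.
    apply (cont2d_1d (fun u v => Iv A (jx c1 c2 m l h k v) s u)).
    apply cont_Iv; auto. apply HT; auto. rewrite Rminus_0_r in Hy; auto. lra.
Qed.

Lemma d2G_val A L c1 c2 m l h k : Hyp c1 c2 m l h k -> 0 < L ->
  d2G A L c1 c2 (fun _ : R => 0) m l h k = RInt (fun x => D2 A (jx c1 c2 m l h k x)) 0 L.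
Proof.
  intros H HL. destruct (Tbound c1 c2 m l h k L H HL) as [d [Hd HT]].
  pose proof H as H0. prep H.
  unfold d2G.
  rewrite (Derive_ext_loc _ (fun s => RInt (fun x => Gt A (jx c1 c2 m l h k x) s 0) 0 L) 0).
  2:{ apply (locally_R _ 0 d Hd). intros y Hy. rewrite Rminus_0_r in Hy.
      apply (dG_var A L c1 c2 m l h k d); auto. }
  assert (E : RInt (fun x => D2 A (jx c1 c2 m l h k x)) 0 L =
              RInt (fun x => Derive (fun u => Gt A (jx c1 c2 m l h k x) u 0) 0) 0 L).
  { apply RInt_ext. intros x Hx. minmax HL. rewrite <- Gst0. symmetry. apply is_derive_unique. apply Gt_ds'.
    apply HT; rewrite ?Rabs_R0; lra. }
  rewrite E. apply is_derive_unique.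
  apply (is_derive_RInt_param (fun u x => Gt A (jx c1 c2 m l h k x) u 0)).
  - apply (locally_R _ 0 d Hd). intros y Hy x Hx. minmax HL. eexists. apply Gt_ds'.
    apply HT; [rewrite Rminus_0_r in Hy; exact Hy | rewrite Rabs_R0; exact Hd | lra].
  - intros x Hx. minmax HL.
    apply (continuity_2d_pt_ext_loc (fun u v => Gst A (jx c1 c2 m l h k v) u)).
    + exists (mkposreal (Rmin d 1) ltac:(apply Rmin_pos; lra)). intros u v Hu0 Hv0. simpl in Hu0, Hv0.
      symmetry. apply is_derive_unique. apply Gt_ds'. apply HT; rewrite ?Rabs_R0.
      * rewrite Rminus_0_r in Hu0. pose proof (Rmin_l d 1). lra.
      * lra.
      * pose proof (Rmin_r d 1). apply Rabs_def2 in Hv0. lra.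
    + apply cont_Gst; auto. apply HT; rewrite ?Rabs_R0; lra.
  - apply (locally_R _ 0 d Hd). intros y Hy. apply (@ex_RInt_continuous R_CompleteNormedModule).
    intros z Hz. minmax HL.
    apply (cont2d_1d (fun u v => Gt A (jx c1 c2 m l h k v) u 0)).
    apply cont_Gt2; auto. apply HT; rewrite ?Rabs_R0; try lra. rewrite Rminus_0_r in Hy; auto.
Qed.

Lemma dG_val A L c1 c2 l h k : Hyp c1 c2 l l h k -> 0 < L ->
  dG A L c1 c2 (fun _ : R => 0) l h k = RInt (fun x => D1 A (jx c1 c2 l l h k x)) 0 L.
Proof.
  intros H HL. destruct (Tbound c1 c2 l l h k L H HL) as [d [Hd HT]].
  replace (fun _ : R => 0) with (fun x => (fun _ : R => 0) x + 0 * l x)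
    by (apply functional_extensionality; intro; ring).
  rewrite (dG_var A L c1 c2 l l h k d H HL Hd HT 0) by (rewrite Rabs_R0; lra).
  apply RInt_ext. intros. apply Gt00.
Qed.

Lemma G0_val A L c1 c2 h k : smooth c1 -> smooth c2 -> ucs c1 c2 ->
  Gmet A L c1 c2 (fun _ : R => 0) h k = RInt (fun x => (1 + A * curvature c1 c2 x ^ 2) * (h x * k x)) 0 L.
Proof.
  intros H1 H2 H3. rewrite Gmet_pt by (auto; apply smooth_const).
  apply RInt_ext. intros x _.
  rewrite (Derive_ext (Derive (fun _ : R => 0)) (fun _ => 0)) by (intro; apply Derive_const).
  rewrite !Derive_const. unfold Psi, NNf, TTf.
  replace ((1 - 0 * curvature c1 c2 x) ^ 2 + 0 ^ 2) with 1 by ring. rewrite sqrt_1. match goal with |- ?a = ?b => change (@eq R a b) end. field.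
Qed.

Lemma isR_minus (f g : R -> R) a b If Ig : is_RInt f a b If -> is_RInt g a b Ig ->
  is_RInt (fun x => f x - g x) a b (If - Ig).
Proof. intros H1 H2. exact (is_RInt_minus f g a b If Ig H1 H2). Qed.
Lemma isR_plus (f g : R -> R) a b If Ig : is_RInt f a b If -> is_RInt g a b Ig ->
  is_RInt (fun x => f x + g x) a b (If + Ig).
Proof. intros H1 H2. exact (is_RInt_plus f g a b If Ig H1 H2). Qed.
Lemma isR_scal (f : R -> R) a b c If : is_RInt f a b If ->
  is_RInt (fun x => c * f x) a b (c * If).
Proof. intros H1. exact (is_RInt_scal f a b c If H1). Qed.
Lemma isR_ex (f : R -> R) a b : ex_RInt f a b -> is_RInt f a b (RInt f a b).
Proof. intro H. exact (RInt_correct f a b H). Qed.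
Lemma isR_ext (f g : R -> R) a b I : (forall x, f x = g x) -> is_RInt f a b I -> is_RInt g a b I.
Proof. intros E H. eapply is_RInt_ext; [|exact H]. intros; apply E. Qed.
Lemma isR_uniq (f : R -> R) a b I : is_RInt f a b I -> RInt f a b = I.
Proof. intro H. exact (is_RInt_unique f a b I H). Qed.
Lemma exR_cont (f : R -> R) a b : (forall x, continuous f x) -> ex_RInt f a b.
Proof. intro H. apply (@ex_RInt_continuous R_CompleteNormedModule). intros; apply H. Qed.

Lemma exact_int (P phi : R -> R) L : (forall x, is_derive P x (phi x)) -> (forall x, continuous phi x) ->
  periodic L P -> is_RInt phi 0 L 0.
Proof.
  intros HD HC Hp.
  pose proof (is_RInt_derive P phi 0 L (fun x _ => HD x) (fun x _ => HC x)) as H.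
  assert (E : P L - P 0 = 0).
  { rewrite <- (Rplus_0_l L) at 1. rewrite Hp. ring. }
  change (is_RInt phi 0 L (P L - P 0)) in H. rewrite E in H. exact H.
Qed.

Ltac nz_side2 :=
  first [ lra
        | apply pow_nonzero; nz_side2
        | apply Rmult_integral_contrapositive_currified; nz_side2
        | apply Rgt_not_eq; apply Rplus_lt_le_0_compat; [lra | apply Rmult_le_pos; [assumption | apply pow2_ge_0]]
        | apply Rgt_not_eq, sqrt_lt_R0; match goal with H : 0 < Tv _ _ _ |- _ => exact H end ].

Ltac cont1 :=
  match goal with |- continuous ?f ?x =>
    apply (cont2d_1d (fun _ v => f v) 0 x); cbv beta;
    unfold D1, D2, Nst, Tst, jx; cbv zeta; cbn [pk pk1 pw pm0 pm1 pm2 pl0 pl1 pl2];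
    c2d; nz_side2 end.

Lemma zero_of_int (f : R -> R) L : 0 < L -> (forall x, continuous f x) -> (forall x, 0 <= f x) ->
  RInt f 0 L = 0 -> forall x, 0 <= x <= L -> f x = 0.
Proof.
  intros HL Hc Hp HI x0 Hx0.
  destruct (Rle_lt_or_eq_dec 0 (f x0) (Hp x0)) as [Hlt|Heq]; [|auto].
  exfalso.
  pose proof (Hc x0) as C. apply continuity_pt_filterlim in C.
  destruct (C (f x0 / 2) ltac:(lra)) as [d [Hd Hdd]].
  set (a := Rmax 0 (x0 - d/2)). set (b := Rmin L (x0 + d/2)).
  assert (Hab : a < b).
  { unfold a, b. unfold Rmax, Rmin. destruct Rle_dec; destruct Rle_dec; lra. }
  assert (Ha : 0 <= a <= x0) by (unfold a, Rmax; destruct Rle_dec; lra).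
  assert (Hb : x0 <= b <= L) by (unfold b, Rmin; destruct Rle_dec; lra).
  assert (Hpos : forall y, a <= y <= b -> f x0 / 2 < f y).
  { intros y Hy. assert (Hy' : Rabs (y - x0) < d).
    { unfold a, b, Rmax, Rmin in Hy. apply Rabs_def1; destruct Rle_dec; destruct Rle_dec; lra. }
    destruct (Req_dec y x0) as [->|Hne]; [lra|].
    pose proof (Hdd y (conj (conj I (not_eq_sym Hne)) Hy')) as H. simpl in H. unfold R_dist in H.
    apply Rabs_def2 in H. lra. }
  assert (E1 : ex_RInt f 0 a) by (apply exR_cont; auto).
  assert (E2 : ex_RInt f a b) by (apply exR_cont; auto).
  assert (E3 : ex_RInt f b L) by (apply exR_cont; auto).
  assert (I1 : 0 <= RInt f 0 a) by (apply RInt_ge_0; auto; lra).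
  assert (I3 : 0 <= RInt f b L) by (apply RInt_ge_0; auto; lra).
  assert (I2 : 0 < RInt f a b).
  { apply RInt_gt_0; auto. intros y Hy. pose proof (Hpos y ltac:(lra)). lra. }
  assert (Ch : RInt f 0 L = RInt f 0 a + RInt f a b + RInt f b L).
  { pose proof (RInt_Chasles f 0 a b E1 E2) as C1.
    pose proof (RInt_Chasles f 0 b L (ex_RInt_Chasles f 0 a b E1 E2) E3) as C2.
    change (RInt f 0 a + RInt f a b = RInt f 0 b) in C1.
    change (RInt f 0 b + RInt f b L = RInt f 0 L) in C2. lra. }
  lra.
Qed.

Lemma periodic_nat (g : R -> R) L : periodic L g -> forall (n : nat) x, g (x + INR n * L) = g x /\ g (x - INR n * L) = g x.
Proof.
  intros Hp n. induction n; intro x.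
  - simpl. split; f_equal; ring.
  - rewrite S_INR. destruct (IHn x) as [I1 I2]. split.
    + replace (x + (INR n + 1) * L) with ((x + INR n * L) + L) by ring. rewrite Hp. auto.
    + replace (x - INR n * L) with ((x - (INR n + 1) * L) + L) in I2 by ring. rewrite Hp in I2. auto.
Qed.

Lemma periodic_reduce (g : R -> R) L : 0 < L -> periodic L g -> forall x, exists y, 0 <= y <= L /\ g x = g y.
Proof.
  intros HL Hp x.
  set (z := Int_part (x / L)).
  destruct (base_Int_part (x / L)) as [B1 B2]. fold z in B1, B2.
  assert (Hy1 : IZR z * L <= x) by (apply (Rmult_le_reg_r (/ L)); [apply Rinv_0_lt_compat; lra|];
    replace (IZR z * L * / L) with (IZR z) by (field; lra); exact B1).
  assert (Hy2 : x < IZR z * L + L).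
  { apply (Rmult_lt_reg_r (/ L)); [apply Rinv_0_lt_compat; lra|].
    replace ((IZR z * L + L) * / L) with (IZR z + 1) by (field; lra). unfold Rdiv in B2. lra. }
  exists (x - IZR z * L). split; [lra|].
  destruct (Z.le_gt_cases 0 z) as [Hz|Hz].
  - rewrite <- (Z2Nat.id z Hz). rewrite <- INR_IZR_INZ.
    symmetry. apply (periodic_nat g L Hp).
  - replace z with (- Z.of_nat (Z.to_nat (- z)))%Z by lia.
    rewrite opp_IZR, <- INR_IZR_INZ.
    replace (x - - INR (Z.to_nat (- z)) * L) with (x + INR (Z.to_nat (- z)) * L) by ring.
    symmetry. apply (periodic_nat g L Hp).
Qed.

Lemma kap_periodic L c1 c2 : Cinf_per L c1 -> Cinf_per L c2 -> ucs c1 c2 -> periodic L (curvature c1 c2).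
Proof.
  intros [S1 P1] [S2 P2] U x. rewrite !kap_eq by auto.
  rewrite (periodic_D L c1), (periodic_D L c2), (periodic_D L (Derive c1)), (periodic_D L (Derive c2));
   auto; try apply smooth_D; auto; apply periodic_D; auto.
Qed.

Definition g0f A (c1 c2 h k : R -> R) x :=
  ((1/2 * curvature c1 c2 x - 1/2 * A * curvature c1 c2 x ^ 3 + A * Derive_n (curvature c1 c2) 2 x) * h x * k x
   + 2 * A * Derive (curvature c1 c2) x * (Derive h x * k x + h x * Derive k x)
   + 2 * A * curvature c1 c2 x * Derive h x * Derive k x) / (1 + A * curvature c1 c2 x ^ 2).

Lemma onepos A y : 0 <= A -> 0 < 1 + A * y ^ 2.
Proof. intro HA. pose proof (pow2_ge_0 y). nra. Qed.

Ltac smooth_tac :=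
  repeat (etafix; match goal with
  | |- smooth ?F => let c := eval cbv beta in (F 0) in constr_eq F (fun _ : R => c); apply smooth_const
  | |- smooth (fun x => @?f x + @?g x) => apply (smooth_plus f g)
  | |- smooth (fun x => @?f x - @?g x) => apply (smooth_minus f g)
  | |- smooth (fun x => @?f x * @?g x) => apply (smooth_mult f g)
  | |- smooth (fun x => @?f x / @?g x) => apply (smooth_div f g)
  | |- smooth (fun x => (@?f x) ^ ?n) => apply (smooth_pow f n)
  | |- smooth (fun x => - @?f x) => apply (smooth_opp f)
  | |- smooth _ => assumption
  end).

Ltac prepP c1 c2 L HC1 HC2 HU :=
  let K := fresh "PK" in assert (K := kap_periodic L c1 c2 HC1 HC2 HU);
  let HK := fresh "SK" in assert (HK := kap_smooth c1 c2 (proj1 HC1) (proj1 HC2) HU);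
  let K1 := fresh "PK1" in assert (K1 := periodic_D L _ HK K);
  let HK1 := fresh "SK1" in assert (HK1 := smooth_D _ HK);
  let K2 := fresh "PK2" in assert (K2 := periodic_D L _ HK1 K1);
  let HK2 := fresh "SK2" in assert (HK2 := smooth_D _ HK1).

Lemma g0_Cinf A L c1 c2 h k : 0 <= A -> Cinf_per L c1 -> Cinf_per L c2 -> ucs c1 c2 ->
  Cinf_per L h -> Cinf_per L k -> Cinf_per L (g0f A c1 c2 h k).
Proof.
  intros HA HC1 HC2 HU [Sh Ph] [Sk Pk]. prepP c1 c2 L HC1 HC2 HU.
  assert (Sh1 := smooth_D _ Sh). assert (Sk1 := smooth_D _ Sk).
  assert (Ph1 := periodic_D L _ Sh Ph). assert (Pk1 := periodic_D L _ Sk Pk).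
  split.
  - unfold g0f. change (Derive_n (curvature c1 c2) 2) with (Derive (Derive (curvature c1 c2))).
    smooth_tac. intro x. apply Rgt_not_eq, onepos, HA.
  - intro x. unfold g0f. change (Derive_n (curvature c1 c2) 2) with (Derive (Derive (curvature c1 c2))).
    rewrite PK, PK1, PK2, Ph, Ph1, Pk, Pk1. reflexivity.
Qed.

Lemma Cinf_minus L f g : Cinf_per L f -> Cinf_per L g -> Cinf_per L (fun x => f x - g x).
Proof. intros [S1 P1] [S2 P2]. split; [apply smooth_minus; auto|]. intro x. rewrite P1, P2. reflexivity. Qed.

Lemma gamma_prop A L c1 c2 h k : 0 <= A -> 0 < L -> Cinf_per L c1 -> Cinf_per L c2 -> ucs c1 c2 ->
  Cinf_per L h -> Cinf_per L k -> forall l, Cinf_per L l ->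
  2 * Gmet A L c1 c2 (fun _ : R => 0) (g0f A c1 c2 h k) l =
    dG A L c1 c2 (fun _ : R => 0) l h k - dG A L c1 c2 (fun _ : R => 0) h k l - dG A L c1 c2 (fun _ : R => 0) k l h.
Proof.
  intros HA HL HC1 HC2 HU HCh HCk l HCl.
  pose proof HCh as [Sh Ph]. pose proof HCk as [Sk Pk]. pose proof HCl as [Sl Pl].
  prepP c1 c2 L HC1 HC2 HU.
  assert (Sh1 := smooth_D _ Sh). assert (Sk1 := smooth_D _ Sk). assert (Sl1 := smooth_D _ Sl).
  assert (Sh2 := smooth_D _ Sh1). assert (Sk2 := smooth_D _ Sk1). assert (Sl2 := smooth_D _ Sl1).
  assert (Ph1 := periodic_D L _ Sh Ph). assert (Pk1 := periodic_D L _ Sk Pk). assert (Pl1 := periodic_D L _ Sl Pl).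
  assert (SK2' : smooth (Derive_n (curvature c1 c2) 2)) by exact SK2.
  rewrite G0_val by (auto; apply HC1 || apply HC2).
  rewrite (dG_val A L c1 c2 l h k) by (auto; repeat split; auto; apply HC1 || apply HC2).
  rewrite (dG_val A L c1 c2 h k l) by (auto; repeat split; auto; apply HC1 || apply HC2).
  rewrite (dG_val A L c1 c2 k l h) by (auto; repeat split; auto; apply HC1 || apply HC2).
  set (P := fun x => 2 * A * (Derive l x * (curvature c1 c2 x * h x * k x) - l x * (Derive (curvature c1 c2) x * h x * k x + curvature c1 c2 x * Derive h x * k x
        + curvature c1 c2 x * h x * Derive k x))).
  set (phi := fun x => D1 A (jx c1 c2 l l h k x) - D1 A (jx c1 c2 h h k l x) - D1 A (jx c1 c2 k k l h x)
      - 2 * ((1 + A * curvature c1 c2 x ^ 2) * (g0f A c1 c2 h k x * l x))).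
  assert (HP : forall x, is_derive P x (phi x)).
  { intro x. unfold P, phi. auto_derive.
    - repeat split; apply smooth_ex; auto.
    - etafix. unfold D1, jx, g0f; cbn [pk pk1 pw pm0 pm1 pm2 pl0 pl1 pl2].
      change (Derive_n (curvature c1 c2) 2 x) with (Derive (Derive (curvature c1 c2)) x).
      match goal with |- ?a = ?b => change (@eq R a b) end. field. apply Rgt_not_eq, onepos, HA. }
  assert (HPp : periodic L P).
  { intro x. unfold P. rewrite PK, PK1, Ph, Ph1, Pk, Pk1, Pl, Pl1. reflexivity. }
  assert (Hphi : forall x, continuous phi x).
  { intro x. unfold phi, g0f. cont1. }
  pose proof (exact_int P phi L HP Hphi HPp) as E0.
  assert (C1 : forall x, continuous (fun x => D1 A (jx c1 c2 l l h k x)) x) by (intro; cont1).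
  assert (C2 : forall x, continuous (fun x => D1 A (jx c1 c2 h h k l x)) x) by (intro; cont1).
  assert (C3 : forall x, continuous (fun x => D1 A (jx c1 c2 k k l h x)) x) by (intro; cont1).
  assert (C4 : forall x, continuous (fun x => (1 + A * curvature c1 c2 x ^ 2) * (g0f A c1 c2 h k x * l x)) x)
    by (intro; unfold g0f; cont1).
  set (f1 := fun x : R => D1 A (jx c1 c2 l l h k x)).
  set (f2 := fun x : R => D1 A (jx c1 c2 h h k l x)).
  set (f3 := fun x : R => D1 A (jx c1 c2 k k l h x)).
  set (f4 := fun x : R => (1 + A * curvature c1 c2 x ^ 2) * (g0f A c1 c2 h k x * l x)).
  pose proof (isR_minus _ _ _ _ _ _ (isR_minus _ _ _ _ _ _ (isR_minus _ _ _ _ _ _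
     (isR_ex f1 0 L (exR_cont f1 0 L C1)) (isR_ex f2 0 L (exR_cont f2 0 L C2))) (isR_ex f3 0 L (exR_cont f3 0 L C3)))
     (isR_scal _ _ _ 2 _ (isR_ex f4 0 L (exR_cont f4 0 L C4)))) as E1.
  assert (E2 : RInt phi 0 L = RInt f1 0 L - RInt f2 0 L - RInt f3 0 L - 2 * RInt f4 0 L)
    by (apply isR_uniq; exact E1).
  apply isR_uniq in E0. lra.
Qed.

Lemma Gamma_val A L c1 c2 h k : 0 <= A -> 0 < L -> Cinf_per L c1 -> Cinf_per L c2 -> ucs c1 c2 ->
  Cinf_per L h -> Cinf_per L k -> forall x, Gamma A L c1 c2 (fun _ : R => 0) h k x = g0f A c1 c2 h k x.
Proof.
  intros HA HL HC1 HC2 HU HCh HCk. unfold Gamma.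
  match goal with |- forall x, epsilon ?i ?P x = _ =>
    assert (HP : P (epsilon i P)) by (apply epsilon_spec; exists (g0f A c1 c2 h k); split;
       [apply g0_Cinf; auto | apply gamma_prop; auto]);
    set (G := epsilon i P) in * end.
  destruct HP as [HGc HGp].
  pose proof (g0_Cinf A L c1 c2 h k HA HC1 HC2 HU HCh HCk) as Hg0.
  set (l := fun y => G y - g0f A c1 c2 h k y).
  assert (Hl : Cinf_per L l) by (apply Cinf_minus; auto).
  pose proof (HGp l Hl) as E1. pose proof (gamma_prop A L c1 c2 h k HA HL HC1 HC2 HU HCh HCk l Hl) as E2.
  rewrite <- E2 in E1.
  rewrite !G0_val in E1 by (auto; apply HC1 || apply HC2).
  pose proof HCh as [Sh Ph]. pose proof HCk as [Sk Pk]. pose proof HGc as [SG PG].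
  prepP c1 c2 L HC1 HC2 HU.
  assert (Sh1 := smooth_D _ Sh). assert (Sk1 := smooth_D _ Sk).
  assert (SK2' : smooth (Derive_n (curvature c1 c2) 2)) by exact SK2.
  set (q := fun y => (1 + A * curvature c1 c2 y ^ 2) * (l y * l y)).
  assert (Cq : forall y, continuous q y) by (intro; unfold q, l, g0f; cont1).
  set (f1 := fun y : R => (1 + A * curvature c1 c2 y ^ 2) * (G y * l y)).
  set (f2 := fun y : R => (1 + A * curvature c1 c2 y ^ 2) * (g0f A c1 c2 h k y * l y)).
  assert (C1 : forall y, continuous f1 y) by (intro; unfold f1, l, g0f; cont1).
  assert (C2 : forall y, continuous f2 y) by (intro; unfold f2, l, g0f; cont1).
  assert (Iq : is_RInt q 0 L (RInt f1 0 L - RInt f2 0 L)).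
  { eapply isR_ext; [|exact (isR_minus _ _ _ _ _ _ (isR_ex f1 0 L (exR_cont f1 0 L C1)) (isR_ex f2 0 L (exR_cont f2 0 L C2)))].
    intro y. unfold f1, f2, q, l. ring. }
  apply isR_uniq in Iq.
  assert (Z : forall y, 0 <= y <= L -> l y = 0).
  { intros y Hy. pose proof (zero_of_int q L HL Cq) as Zq.
    assert (Hq0 : forall y, 0 <= q y) by (intro z; unfold q; apply Rmult_le_pos;
      [left; apply onepos; auto | apply Rle_0_sqr]).
    assert (Hq1 : RInt q 0 L = 0)  by (change (2 * RInt f1 0 L = 2 * RInt f2 0 L) in E1; lra).
    specialize (Zq Hq0 Hq1 y Hy). unfold q in Zq.
    apply Rmult_integral in Zq as [Zq|Zq].
    - pose proof (onepos A (curvature c1 c2 y) HA). lra.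
    - apply Rmult_integral in Zq as [Zq|Zq]; auto. }
  intro x. destruct (periodic_reduce l L HL (proj2 Hl) x) as [y [Hy Ey]].
  rewrite (Z y Hy) in Ey. unfold l in Ey. lra.
Qed.

Lemma Curv_val A L c1 c2 m h : 0 <= A -> 0 < L -> Cinf_per L c1 -> Cinf_per L c2 -> ucs c1 c2 ->
  Cinf_per L m -> Cinf_per L h ->
  Curv A L c1 c2 (fun _ : R => 0) m h =
  RInt (fun x => (- (A * curvature c1 c2 x ^ 2 - 1) ^ 2 + 4 * A ^ 2 * curvature c1 c2 x * Derive_n (curvature c1 c2) 2 x
          - 8 * A ^ 2 * Derive (curvature c1 c2) x ^ 2) / (2 * (1 + A * curvature c1 c2 x ^ 2))
          * (m x * Derive h x - Derive m x * h x) ^ 2) 0 L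
  + RInt (fun x => A * (m x * Derive (Derive h) x - Derive (Derive m) x * h x) ^ 2) 0 L.
Proof.
  intros HA HL HC1 HC2 HU HCm HCh.
  pose proof HCh as [Sh Ph]. pose proof HCm as [Sm Pm].
  prepP c1 c2 L HC1 HC2 HU.
  assert (Sh1 := smooth_D _ Sh). assert (Sm1 := smooth_D _ Sm).
  assert (Sh2 := smooth_D _ Sh1). assert (Sm2 := smooth_D _ Sm1).
  assert (SK2' : smooth (Derive_n (curvature c1 c2) 2)) by exact SK2.
  assert (Hy : forall a b c d, Cinf_per L a -> Cinf_per L b -> Cinf_per L c -> Cinf_per L d -> Hyp c1 c2 a b c d).
  { intros a b c d [] [] [] []. repeat split; auto; apply HC1 || apply HC2. }
  unfold Curv.
  rewrite (d2G_val A L c1 c2 m h h m) by auto.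
  rewrite (d2G_val A L c1 c2 m m h h) by auto.
  rewrite (d2G_val A L c1 c2 h h m m) by auto.
  rewrite !G0_val by (auto; apply HC1 || apply HC2).
  rewrite !(RInt_ext (fun x => (1 + A * curvature c1 c2 x ^ 2) * (Gamma A L c1 c2 (fun _ : R => 0) _ _ x * Gamma A L c1 c2 (fun _ : R => 0) _ _ x)) (fun x => (1 + A * curvature c1 c2 x ^ 2) * (g0f A c1 c2 _ _ x * g0f A c1 c2 _ _ x)))
    by (intros; rewrite !Gamma_val by auto; reflexivity).
  set (f1 := fun x : R => D2 A (jx c1 c2 m h h m x)).
  set (f2 := fun x : R => D2 A (jx c1 c2 m m h h x)).
  set (f3 := fun x : R => D2 A (jx c1 c2 h h m m x)).
  set (f4 := fun x : R => (1 + A * curvature c1 c2 x ^ 2) * (g0f A c1 c2 h m x * g0f A c1 c2 m h x)).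
  set (f5 := fun x : R => (1 + A * curvature c1 c2 x ^ 2) * (g0f A c1 c2 m m x * g0f A c1 c2 h h x)).
  set (r1 := fun x => (- (A * curvature c1 c2 x ^ 2 - 1) ^ 2 + 4 * A ^ 2 * curvature c1 c2 x * Derive_n (curvature c1 c2) 2 x
          - 8 * A ^ 2 * Derive (curvature c1 c2) x ^ 2) / (2 * (1 + A * curvature c1 c2 x ^ 2))
          * (m x * Derive h x - Derive m x * h x) ^ 2).
  set (r2 := fun x => A * (m x * Derive (Derive h) x - Derive (Derive m) x * h x) ^ 2).
  assert (CC1 : forall x, continuous f1 x) by (intro; unfold f1; cont1).
  assert (CC2 : forall x, continuous f2 x) by (intro; unfold f2; cont1).
  assert (CC3 : forall x, continuous f3 x) by (intro; unfold f3; cont1).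
  assert (CC4 : forall x, continuous f4 x) by (intro; unfold f4, g0f; cont1).
  assert (CC5 : forall x, continuous f5 x) by (intro; unfold f5, g0f; cont1).
  assert (CC6 : forall x, continuous r1 x) by (intro; unfold r1; cont1).
  assert (CC7 : forall x, continuous r2 x) by (intro; unfold r2; cont1).
  pose proof (isR_plus _ _ _ _ _ _ (isR_minus _ _ _ _ _ _ (isR_plus _ _ _ _ _ _ (isR_plus _ _ _ _ _ _
     (isR_scal _ _ _ (-1) _ (isR_ex f1 0 L (exR_cont f1 0 L CC1)))
     (isR_scal _ _ _ (/2) _ (isR_ex f2 0 L (exR_cont f2 0 L CC2))))
     (isR_scal _ _ _ (/2) _ (isR_ex f3 0 L (exR_cont f3 0 L CC3))))
     (isR_ex f4 0 L (exR_cont f4 0 L CC4)))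
     (isR_ex f5 0 L (exR_cont f5 0 L CC5))) as E1.
  pose proof (isR_plus _ _ _ _ _ _ (isR_ex r1 0 L (exR_cont r1 0 L CC6)) (isR_ex r2 0 L (exR_cont r2 0 L CC7))) as E2.
  assert (E3 : forall x, -1 * f1 x + / 2 * f2 x + / 2 * f3 x - f4 x + f5 x = r1 x + r2 x).
  { intro x. unfold f1, f2, f3, f4, f5, r1, r2, D2, Nst, Tst, jx, g0f; cbn [pk pk1 pw pm0 pm1 pm2 pl0 pl1 pl2].
    change (Derive_n (curvature c1 c2) 2 x) with (Derive (Derive (curvature c1 c2)) x).
    field. apply Rgt_not_eq, onepos, HA. }
  apply (isR_ext _ _ _ _ _ E3) in E1.
  apply isR_uniq in E1. apply isR_uniq in E2. lra.
Qed.

Lemma quad_lemma a b c : 0 <= c -> (forall t, 0 <= a - 2 * t * b + t ^ 2 * c) -> 0 <= a * c - b ^ 2.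
Proof.
  intros Hc H. destruct (Rle_lt_or_eq_dec 0 c Hc) as [Hc'|Hc'].
  - specialize (H (b / c)).
    assert (E : a * c - b ^ 2 = c * (a - 2 * (b / c) * b + (b / c) ^ 2 * c)) by (field; lra).
    rewrite E. apply Rmult_le_pos; lra.
  - subst c. destruct (Req_dec b 0) as [->|Hb].
    + lra.
    + exfalso. specialize (H ((a + 1) / (2 * b))).
      replace (a - 2 * ((a + 1) / (2 * b)) * b + ((a + 1) / (2 * b)) ^ 2 * 0) with (-1) in H by (field; auto).
      lra.
Qed.

Lemma c1to2 (f : R -> R) u x : continuous f x -> continuity_2d_pt (fun _ v => f v) u x.
Proof.
  intro H. apply (continuity_1d_2d_pt_comp f (fun _ v => v)).
  - apply continuity_pt_filterlim. exact H.
  - apply continuity_2d_pt_id2.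
Qed.

Lemma CS_lemma (w a b : R -> R) L : 0 < L -> (forall x, 0 <= w x) ->
  (forall x, continuous (fun x => w x * (a x * a x)) x) ->
  (forall x, continuous (fun x => w x * (a x * b x)) x) ->
  (forall x, continuous (fun x => w x * (b x * b x)) x) ->
  0 <= RInt (fun x => w x * (a x * a x)) 0 L * RInt (fun x => w x * (b x * b x)) 0 L
       - RInt (fun x => w x * (a x * b x)) 0 L ^ 2.
Proof.
  intros HL Hw Caa Cab Cbb.
  apply quad_lemma.
  - apply RInt_ge_0; [lra | apply exR_cont; auto |]. intros; apply Rmult_le_pos; auto. apply Rle_0_sqr.
  - intro t.
    set (faa := fun x => w x * (a x * a x)). set (fab := fun x => w x * (a x * b x)).
    set (fbb := fun x => w x * (b x * b x)).
    pose proof (isR_plus _ _ _ _ _ _ (isR_minus _ _ _ _ _ _ (isR_ex faa 0 L (exR_cont faa 0 L Caa))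
        (isR_scal _ _ _ (2 * t) _ (isR_ex fab 0 L (exR_cont fab 0 L Cab))))
        (isR_scal _ _ _ (t ^ 2) _ (isR_ex fbb 0 L (exR_cont fbb 0 L Cbb)))) as E.
    apply isR_uniq in E. rewrite <- E.
    apply RInt_ge_0; [lra| |].
    + apply (ex_RInt_ext (fun x => w x * ((a x - t * b x) * (a x - t * b x)))).
      * intros. unfold faa, fab, fbb. match goal with |- ?a = ?b => change (@eq R a b) end; ring.
      * apply exR_cont. intro x. apply (cont2d_1d (fun _ v => w v * ((a v - t * b v) * (a v - t * b v))) 0 x).
        assert (E2 : forall v, w v * ((a v - t * b v) * (a v - t * b v)) = w v * (a v * a v) - 2 * t * (w v * (a v * b v)) + t ^ 2 * (w v * (b v * b v))) by (intro; ring).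
        eapply continuity_2d_pt_ext; [intros; symmetry; apply E2|].
        apply (continuity_2d_pt_plus (fun _ v => w v * (a v * a v) - 2 * t * (w v * (a v * b v)))
                 (fun _ v => t ^ 2 * (w v * (b v * b v)))).
        -- apply (continuity_2d_pt_minus (fun _ v => w v * (a v * a v)) (fun _ v => 2 * t * (w v * (a v * b v)))).
           ++ apply (c1to2 (fun v => w v * (a v * a v))), Caa.
           ++ apply (continuity_2d_pt_mult (fun _ _ => 2 * t) (fun _ v => w v * (a v * b v))).
              apply continuity_2d_pt_const. apply (c1to2 (fun v => w v * (a v * b v))), Cab.
        -- apply (continuity_2d_pt_mult (fun _ _ => t ^ 2) (fun _ v => w v * (b v * b v))).
           apply continuity_2d_pt_const. apply (c1to2 (fun v => w v * (b v * b v))), Cbb.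
    + intros x _. unfold faa, fab, fbb.
      replace (w x * (a x * a x) - 2 * t * (w x * (a x * b x)) + t ^ 2 * (w x * (b x * b x)))
        with (w x * ((a x - t * b x) * (a x - t * b x))) by ring.
      apply Rmult_le_pos; auto. apply Rle_0_sqr.
Qed.

Theorem mainTheorem18 (A L : R) (c1 c2 : R -> R) :
  0 <= A -> 0 < L ->
  Cinf_per L c1 -> Cinf_per L c2 ->
  (forall x, Derive c1 x ^ 2 + Derive c2 x ^ 2 = 1) ->
  let kap := curvature c1 c2 in
  let f0 := fun _ : R => 0 in
  (forall h k : R -> R, Cinf_per L h -> Cinf_per L k -> forall x,
     Gamma A L c1 c2 f0 h k x =
       ((1/2 * kap x - 1/2 * A * kap x ^ 3 + A * Derive_n kap 2 x) * h x * k x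
        + 2 * A * Derive kap x * (Derive h x * k x + h x * Derive k x)
        + 2 * A * kap x * Derive h x * Derive k x) / (1 + A * kap x ^ 2)) /\
  (forall m h : R -> R, Cinf_per L m -> Cinf_per L h ->
     let W := fun x => m x * Derive h x - Derive m x * h x in
     Curv A L c1 c2 f0 m h =
       circ_int L (fun x =>
         (- (A * kap x ^ 2 - 1) ^ 2 + 4 * A ^ 2 * kap x * Derive_n kap 2 x
          - 8 * A ^ 2 * Derive kap x ^ 2) / (2 * (1 + A * kap x ^ 2)) * W x ^ 2)
       + circ_int L (fun x => A * Derive W x ^ 2)) /\
  (A = 0 ->
     (forall h k : R -> R, Cinf_per L h -> Cinf_per L k -> forall x,
        Gamma A L c1 c2 f0 h k x = 1/2 * kap x * h x * k x) /\
     (forall m h : R -> R, Cinf_per L m -> Cinf_per L h ->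
        let W := fun x => m x * Derive h x - Derive m x * h x in
        Curv A L c1 c2 f0 m h = - (1/2) * circ_int L (fun x => W x ^ 2) /\
        Curv A L c1 c2 f0 m h <= 0 /\
        (lin_indep m h -> 0 <= sectional A L c1 c2 f0 m h))).
Proof.
  intros HA HL HC1 HC2 HU. cbv zeta.
  assert (PartB : forall m h : R -> R, Cinf_per L m -> Cinf_per L h ->
     Curv A L c1 c2 (fun _ : R => 0) m h =
       circ_int L (fun x =>
         (- (A * curvature c1 c2 x ^ 2 - 1) ^ 2 + 4 * A ^ 2 * curvature c1 c2 x * Derive_n (curvature c1 c2) 2 x
          - 8 * A ^ 2 * Derive (curvature c1 c2) x ^ 2) / (2 * (1 + A * curvature c1 c2 x ^ 2))
          * (m x * Derive h x - Derive m x * h x) ^ 2)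
       + circ_int L (fun x => A * Derive (fun x => m x * Derive h x - Derive m x * h x) x ^ 2)).
  { intros m h HCm HCh. rewrite (Curv_val A L c1 c2 m h) by auto. unfold circ_int. f_equal.
    apply RInt_ext. intros x _. f_equal. f_equal.
    symmetry. apply is_derive_unique. destruct HCm as [Sm _]. destruct HCh as [Sh _].
    auto_derive.
    - repeat split; apply smooth_ex; auto; apply smooth_D; auto.
    - etafix. ring. }
  split; [|split].
  - intros h k HCh HCk x. rewrite Gamma_val by auto. reflexivity.
  - exact PartB.
  - intro HA0. subst A. split.
    + intros h k HCh HCk x. rewrite Gamma_val by (auto; lra). unfold g0f.
      replace (1 + 0 * curvature c1 c2 x ^ 2) with 1 by ring. field.
    + intros m h HCm HCh.
      pose proof HCm as [Sm Pm]. pose proof HCh as [Sh Ph].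
      assert (Sm1 := smooth_D _ Sm). assert (Sh1 := smooth_D _ Sh).
      assert (CW : forall x, continuous (fun x => (m x * Derive h x - Derive m x * h x) ^ 2) x)
        by (intro; cont1).
      assert (Key : Curv 0 L c1 c2 (fun _ : R => 0) m h =
          - (1/2) * circ_int L (fun x => (m x * Derive h x - Derive m x * h x) ^ 2)).
      { rewrite PartB by auto. unfold circ_int.
        rewrite (RInt_ext (fun x => 0 * Derive (fun x => m x * Derive h x - Derive m x * h x) x ^ 2) (fun _ => 0))
          by (intros; match goal with |- ?a = ?b => change (@eq R a b) end; ring).
        rewrite (RInt_ext _ (fun x => - (1/2) * (m x * Derive h x - Derive m x * h x) ^ 2)).
        2:{ intros x _. match goal with |- ?a = ?b => change (@eq R a b) end. field. }
        rewrite (isR_uniq _ _ _ _ (isR_scal _ _ _ (-(1/2)) _ (isR_ex _ 0 L (exR_cont _ 0 L CW)))).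
        rewrite RInt_const. unfold scal; simpl. unfold mult; simpl. ring. }
      assert (Hneg : Curv 0 L c1 c2 (fun _ : R => 0) m h <= 0).
      { rewrite Key. unfold circ_int.
        assert (0 <= RInt (fun x => (m x * Derive h x - Derive m x * h x) ^ 2) 0 L).
        { apply RInt_ge_0; [lra | apply exR_cont; auto |]. intros; apply pow2_ge_0. }
        lra. }
      split; [exact Key|split; [exact Hneg|]].
      intros _. unfold sectional.
      rewrite !G0_val by (apply HC1 || apply HC2 || exact HU).
      prepP c1 c2 L HC1 HC2 HU.
      set (w := fun x => 1 + 0 * curvature c1 c2 x ^ 2).
      assert (Hden := CS_lemma w m h L HL).
      unfold w in Hden.
      assert (D : 0 <= RInt (fun x => (1 + 0 * curvature c1 c2 x ^ 2) * (m x * m x)) 0 L *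
                       RInt (fun x => (1 + 0 * curvature c1 c2 x ^ 2) * (h x * h x)) 0 L -
                       RInt (fun x => (1 + 0 * curvature c1 c2 x ^ 2) * (m x * h x)) 0 L ^ 2).
      { apply Hden; intros; [lra| cont1 | cont1 | cont1]. }
      unfold Rdiv. apply Rmult_le_pos; [lra|].
      destruct (Rle_lt_or_eq_dec _ _ D) as [Dp|D0].
      * left. apply Rinv_0_lt_compat. exact Dp.
      * rewrite <- D0, Rinv_0. lra.
Qed.
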